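(* Let $\lambda$ be a regular cardinal, let $\mathfrak{A},\mathfrak{B}$ be $\lambda$-algebroidal categories all of whose morphisms are monomorphisms, and $\mathfrak{C}$ a category. Let $F:\mathfrak{A}\to\mathfrak{C}$, $G:\mathfrak{B}\to\mathfrak{C}$ be functors such that: $F$ is faithful; $F$ is $\lambda$-cocontinuous and $\mu_{<\lambda}$-cocontinuous for all $\mu<\lambda$; $F$ preserves $\lambda$-smallness with respect to $G$; $G$ is $\lambda_{<\lambda}$-cocontinuous; $G$ preserves monomorphisms; for all $A\in\mathfrak{A}_{<\lambda}$, $B\in\mathfrak{B}_{<\lambda}$ there are at most $\lambda$ morphisms $FA\to GB$ in $\mathfrak{C}$; and $(F\downarrow G)_{<\lambda}$ has the joint embedding property and the amalgamation property. Let $(U,u,T)$ be an $(F\downarrow G)$-universal, $(F\downarrow G)_{<\lambda}$-homogeneous object of $(F\downarrow G)$. Then $U$ is $\mathfrak{A}_{<\lambda}$-saturated if and only if $F\restriction_{\mathfrak{A}_{<\lambda}}$ and $G\restriction_{\mathfrak{B}_{<\lambda}}$ have the mixed amalgamation property.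
   Context: Comma category $(F\downarrow G)$: objects $(A,f,B)$ with $f:FA\to GB$; morphisms $(a,b):(A,f,B)\to(A',f',B')$ with $f'\circ Fa=Gb\circ f$. An ordinal $\lambda$ is viewed as a category ($i\to j$ iff $i\le j$); a $\lambda$-chain is a functor from $\lambda$. An object $A$ is $\lambda$-small if whenever $(S,(f_i)_{i<\lambda})$ is a limiting cocone of a $\lambda$-chain $H$ and $h:A\to S$, there are $j<\lambda$, $g:A\to Hj$ with $h=f_j\circ g$; $\mathfrak{C}_{<\lambda}$ denotes the full subcategory of $\lambda$-small objects. Semi-$\lambda$-algebroidal: for every $\mu\le\lambda$ all $\mu$-chains in $\mathfrak{C}_{<\lambda}$ have colimits and every object is a colimit of a $\lambda$-chain in $\mathfrak{C}_{<\lambda}$; $\lambda$-algebroidal: additionally at most $\lambda$ isomorphism types in $\mathfrak{C}_{<\lambda}$ and at most $\lambda$ morphisms between any two $\lambda$-small objects. $F$ is $\lambda$-cocontinuous if it preserves limiting cocones of $\lambda$-chains, and $\mu_{<\lambda}$-cocontinuous if it preserves limiting cocones of $\mu$-chains of $\lambda$-small objects. $F$ preserves $\lambda$-smallness w.r.t. $G$ if for every $\lambda$-chain $H$ in $\mathfrak{B}$ with limiting cocone $(B,(g_i))$, every $A\in\mathfrak{A}_{<\lambda}$ and $f:FA\to GB$ there are $j<\lambda$, $h:FA\to GHj$ with $Gg_j\circ h=f$. For a full subcategory $\mathfrak{C}^*$: $U$ is $\mathfrak{C}^*$-universal if every object of $\mathfrak{C}^*$ maps to $U$; $\mathfrak{C}^*$-homogeneous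 if for $A\in\mathfrak{C}^*$, $f,g:A\to U$ there is an automorphism $h$ of $U$ with $h\circ f=g$; $\mathfrak{C}^*$-saturated if for all $A,B\in\mathfrak{C}^*$, $f:A\to U$, $g:A\to B$ there is $h:B\to U$ with $h\circ g=f$. Joint embedding and amalgamation properties of a category are the usual ones (common target for two objects; commuting completion of a span). $F$ and $G$ have the mixed amalgamation property if for all $A,B\in\mathfrak{A}$, $T_1\in\mathfrak{B}$, $g:A\to B$, $a:FA\to GT_1$ there exist $T_2\in\mathfrak{B}$, $h:T_1\to T_2$, $b:FB\to GT_2$ with $b\circ Fg=Gh\circ a$. *)

(* Defs.v *)
From Stdlib Require Import ProofIrrelevance.

Set Implicit Arguments.
Unset Strict Implicit.

Record Category := Build_Category {
  Ob :> Type;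
  Hom : Ob -> Ob -> Type;
  idm : forall A, Hom A A;
  comp : forall A B C, Hom B C -> Hom A B -> Hom A C;
  comp_idl : forall A B (f : Hom A B), comp (idm B) f = f;
  comp_idr : forall A B (f : Hom A B), comp f (idm A) = f;
  comp_assoc : forall A B C D (h : Hom C D) (g : Hom B C) (f : Hom A B),
      comp h (comp g f) = comp (comp h g) f }.
Arguments Hom {c} _ _.
Arguments idm {c} _.
Arguments comp {c A B C} _ _.

Record Functor (C D : Category) := Build_Functor {
  fobj :> Ob C -> Ob D;
  fmap : forall A B, Hom A B -> Hom (fobj A) (fobj B);
  fmap_id : forall A, fmap (idm A) = idm (fobj A);
  fmap_comp : forall A B E (g : Hom B E) (f : Hom A B),
      fmap (comp g f) = comp (fmap g) (fmap f) }.
Arguments fmap {C D} f {A B} _ : rename.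

Definition injective (X Y : Type) (f : X -> Y) : Prop :=
  forall x y, f x = f y -> x = y.

Definition mono {C : Category} {A B : Ob C} (f : Hom A B) : Prop :=
  forall (X : Ob C) (g h : Hom X A), comp f g = comp f h -> g = h.

Definition isomorphic {C : Category} (A B : Ob C) : Prop :=
  exists (f : Hom A B) (g : Hom B A), comp g f = idm A /\ comp f g = idm B.

Definition is_automorphism {C : Category} {A : Ob C} (f : Hom A A) : Prop :=
  exists g : Hom A A, comp g f = idm A /\ comp f g = idm A.

Definition faithful {C D : Category} (F : Functor C D) : Prop :=
  forall (A B : Ob C) (f g : Hom A B), fmap F f = fmap F g -> f = g.

Definition preserves_monos {C D : Category} (F : Functor C D) : Prop :=
  forall (A B : Ob C) (f : Hom A B), mono f -> mono (fmap F f).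

Definition lt_of {L : Type} (le : L -> L -> Prop) (i j : L) : Prop :=
  le i j /\ i <> j.

Definition well_order {L : Type} (le : L -> L -> Prop) : Prop :=
  (forall i, le i i) /\
  (forall i j, le i j -> le j i -> i = j) /\
  (forall i j k, le i j -> le j k -> le i k) /\
  (forall i j, le i j \/ le j i) /\
  (forall P : L -> Prop, (exists i, P i) ->
     exists i, P i /\ forall j, P j -> le i j).

(* initial segment {j | j < i}: its order type is an ordinal < lambda, and
   every ordinal < lambda arises this way *)
Definition seg {L : Type} (le : L -> L -> Prop) (i : L) : Type :=
  {j : L | lt_of le j i}.
Definition seg_le {L : Type} (le : L -> L -> Prop) (i : L)
  : seg le i -> seg le i -> Prop :=
  fun x y => le (proj1_sig x) (proj1_sig y).
Arguments seg {L} le i.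
Arguments seg_le {L} le i _ _.

(* (L, le) is (the ordinal of) an infinite regular cardinal lambda:
   a well-order, infinite, an initial ordinal (every proper initial segment
   has strictly smaller cardinality), and regular (every cofinal subset has
   cardinality lambda). *)
Definition regular_cardinal {L : Type} (le : L -> L -> Prop) : Prop :=
  well_order le /\
  (exists f : nat -> L, injective f) /\
  (forall i : L, ~ exists f : L -> seg le i, injective f) /\
  (forall S : L -> Prop, (forall i, exists j, S j /\ le i j) ->
     exists f : L -> {j : L | S j}, injective f).

Record Chain (C : Category) (I : Type) (le : I -> I -> Prop) := Build_Chain {
  ch_ob : I -> Ob C;
  ch_map : forall i j, le i j -> Hom (ch_ob i) (ch_ob j);
  ch_id : forall i (p : le i i), ch_map p = idm (ch_ob i);
  ch_comp : forall i j k (p : le i j) (q : le j k) (r : le i k),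
      ch_map r = comp (ch_map q) (ch_map p) }.
Arguments Chain : clear implicits.
Arguments ch_ob {C I le} _ _.
Arguments ch_map {C I le} _ {i j} _.

Definition is_cocone {C : Category} {I : Type} {le : I -> I -> Prop}
  (X : I -> Ob C) (m : forall i j, le i j -> Hom (X i) (X j))
  (S : Ob C) (f : forall i, Hom (X i) S) : Prop :=
  forall i j (p : le i j), comp (f j) (m i j p) = f i.
Arguments is_cocone {C I le} X m S f.

Definition is_colimit {C : Category} {I : Type} {le : I -> I -> Prop}
  (X : I -> Ob C) (m : forall i j, le i j -> Hom (X i) (X j))
  (S : Ob C) (f : forall i, Hom (X i) S) : Prop :=
  is_cocone X m S f /\
  forall (S' : Ob C) (f' : forall i, Hom (X i) S'), is_cocone X m S' f' ->
    exists h : Hom S S', (forall i, comp h (f i) = f' i) /\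
      forall h' : Hom S S', (forall i, comp h' (f i) = f' i) -> h' = h.
Arguments is_colimit {C I le} X m S f.

Definition chain_colimit {C : Category} {I : Type} {le : I -> I -> Prop}
  (H : Chain C I le) (S : Ob C) (f : forall i, Hom (ch_ob H i) S) : Prop :=
  is_colimit (ch_ob H) (fun i j p => ch_map H p) S f.
Arguments chain_colimit {C I le} H S f.

Definition lambda_small {L : Type} (le : L -> L -> Prop) {C : Category}
  (A : Ob C) : Prop :=
  forall (H : Chain C L le) (S : Ob C) (f : forall i, Hom (ch_ob H i) S),
    chain_colimit H S f ->
    forall h : Hom A S, exists (j : L) (g : Hom A (ch_ob H j)), h = comp (f j) g.

Arguments lambda_small {L} le {C} A.

Definition semi_algebroidal {L : Type} (le : L -> L -> Prop) (C : Category)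
  : Prop :=
  (forall H : Chain C L le, (forall i, lambda_small le (ch_ob H i)) ->
     exists S f, chain_colimit H S f) /\
  (* mu-chains (mu < lambda) in C_{<lambda} have colimits *)
  (forall (i : L) (H : Chain C (seg le i) (seg_le le i)),
     (forall k, lambda_small le (ch_ob H k)) -> exists S f, chain_colimit H S f) /\
  (forall A : Ob C, exists (H : Chain C L le) (f : forall i, Hom (ch_ob H i) A),
     (forall i, lambda_small le (ch_ob H i)) /\ chain_colimit H A f).

Definition algebroidal {L : Type} (le : L -> L -> Prop) (C : Category) : Prop :=
  semi_algebroidal le C /\
  (* at most lambda isomorphism types of lambda-small objects *)
  (exists c : Ob C -> L, forall A B : Ob C,
     lambda_small le A -> lambda_small le B -> c A = c B -> isomorphic A B) /\
  (forall A B : Ob C, lambda_small le A -> lambda_small le B ->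
     exists c : Hom A B -> L, injective c).

Definition preserves_colimits_of {C D : Category} (F : Functor C D)
  (I : Type) (le : I -> I -> Prop) (P : Ob C -> Prop) : Prop :=
  forall (H : Chain C I le), (forall i, P (ch_ob H i)) ->
  forall (S : Ob C) (f : forall i, Hom (ch_ob H i) S),
    chain_colimit H S f ->
    is_colimit (fun i => F (ch_ob H i)) (fun i j p => fmap F (ch_map H p))
               (F S) (fun i => fmap F (f i)).

Arguments preserves_colimits_of {C D} F {I} le P.

Definition lambda_cocontinuous {L : Type} (le : L -> L -> Prop)
  {C D : Category} (F : Functor C D) : Prop :=
  preserves_colimits_of F le (fun _ => True).

(* F is mu_{<lambda}-cocontinuous, mu the order type of the segment below i *)
Definition mu_small_cocontinuous {L : Type} (le : L -> L -> Prop) (i : L)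
  {C D : Category} (F : Functor C D) : Prop :=
  preserves_colimits_of F (seg_le le i) (lambda_small le).

Definition lambda_small_cocontinuous {L : Type} (le : L -> L -> Prop)
  {C D : Category} (F : Functor C D) : Prop :=
  preserves_colimits_of F le (lambda_small le).

Definition preserves_smallness_wrt {L : Type} (le : L -> L -> Prop)
  {A B C : Category} (F : Functor A C) (G : Functor B C) : Prop :=
  forall (H : Chain B L le) (T : Ob B) (g : forall i, Hom (ch_ob H i) T),
    chain_colimit H T g ->
    forall X : Ob A, lambda_small le X ->
    forall f : Hom (F X) (G T),
      exists (j : L) (h : Hom (F X) (G (ch_ob H j))), comp (fmap G (g j)) h = f.

Section Comma.
Variables (A B C : Category) (F : Functor A C) (G : Functor B C).

Record comma_ob := Build_comma_ob {
  cdom : Ob A; ccod : Ob B; carr : Hom (F cdom) (G ccod) }.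

Definition comma_hom (X Y : comma_ob) : Type :=
  {p : Hom (cdom X) (cdom Y) * Hom (ccod X) (ccod Y) |
     comp (carr Y) (fmap F (fst p)) = comp (fmap G (snd p)) (carr X)}.

Lemma sig_eq (T : Type) (P : T -> Prop) (x y : {t : T | P t}) :
  proj1_sig x = proj1_sig y -> x = y.
Proof.
  destruct x as [x px], y as [y py]; simpl; intros ->.
  f_equal; apply proof_irrelevance.
Qed.

Definition comma_id (X : comma_ob) : comma_hom X X.
Proof.
  exists (idm (cdom X), idm (ccod X)); simpl.
  rewrite !fmap_id, comp_idr, comp_idl; reflexivity.
Defined.

Definition comma_comp (X Y Z : comma_ob) (g : comma_hom Y Z) (f : comma_hom X Y)
  : comma_hom X Z.
Proof.
  destruct g as [[g1 g2] pg], f as [[f1 f2] pf]; simpl in *.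
  exists (comp g1 f1, comp g2 f2); simpl.
  rewrite !fmap_comp, comp_assoc, pg, <- comp_assoc, pf, comp_assoc.
  reflexivity.
Defined.

Lemma comma_idl X Y (f : comma_hom X Y) : comma_comp (comma_id Y) f = f.
Proof.
  apply sig_eq; destruct f as [[f1 f2] pf]; simpl.
  rewrite !comp_idl; reflexivity.
Qed.

Lemma comma_idr X Y (f : comma_hom X Y) : comma_comp f (comma_id X) = f.
Proof.
  apply sig_eq; destruct f as [[f1 f2] pf]; simpl.
  rewrite !comp_idr; reflexivity.
Qed.

Lemma comma_assoc X Y Z W (h : comma_hom Z W) (g : comma_hom Y Z)
  (f : comma_hom X Y) :
  comma_comp h (comma_comp g f) = comma_comp (comma_comp h g) f.
Proof.
  apply sig_eq; destruct h as [[h1 h2] ph], g as [[g1 g2] pg],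
    f as [[f1 f2] pf]; simpl.
  rewrite !comp_assoc; reflexivity.
Qed.

Definition Comma : Category :=
  Build_Category comma_idl comma_idr comma_assoc.

End Comma.

Definition universal_for {C : Category} (P : Ob C -> Prop) (U : Ob C) : Prop :=
  forall X : Ob C, P X -> exists f : Hom X U, True.

Definition homogeneous_for {C : Category} (P : Ob C -> Prop) (U : Ob C)
  : Prop :=
  forall (X : Ob C), P X -> forall f g : Hom X U,
    exists h : Hom U U, is_automorphism h /\ comp h f = g.

Definition saturated_for {C : Category} (P : Ob C -> Prop) (U : Ob C) : Prop :=
  forall (X Y : Ob C), P X -> P Y -> forall (f : Hom X U) (g : Hom X Y),
    exists h : Hom Y U, comp h g = f.

Definition JEP {C : Category} (P : Ob C -> Prop) : Prop :=
  forall X Y : Ob C, P X -> P Y ->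
    exists Z : Ob C, P Z /\ (exists f : Hom X Z, True) /\ (exists g : Hom Y Z, True).

Definition AP {C : Category} (P : Ob C -> Prop) : Prop :=
  forall (X Y Z : Ob C), P X -> P Y -> P Z ->
  forall (f : Hom X Y) (g : Hom X Z),
    exists (W : Ob C) (h : Hom Y W) (k : Hom Z W), P W /\ comp h f = comp k g.

Definition mixed_amalgamation {L : Type} (le : L -> L -> Prop)
  {A B C : Category} (F : Functor A C) (G : Functor B C) : Prop :=
  forall (X Y : Ob A) (T1 : Ob B),
    lambda_small le X -> lambda_small le Y -> lambda_small le T1 ->
  forall (g : Hom X Y) (a : Hom (F X) (G T1)),
    exists (T2 : Ob B) (h : Hom T1 T2) (b : Hom (F Y) (G T2)),
      lambda_small le T2 /\ comp b (fmap F g) = comp (fmap G h) a.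

(* Main.v *)
Require Import Defs.
From Stdlib Require Import Classical ClassicalEpsilon FunctionalExtensionality ProofIrrelevance.

Lemma cid' {A : Type} {P : A -> Prop} : (exists x, P x) -> {x | P x}.
Proof. apply constructive_indefinite_description. Qed.

Lemma wo_wf (L : Type) (le : L -> L -> Prop) : well_order le -> well_founded (lt_of le).
Proof.
  intros [Hr [Ha [Ht [Htot Hmin]]]] x.
  apply NNPP; intro Hx.
  destruct (Hmin (fun y => ~ Acc (lt_of le) y)) as [y0 [Hy0 Hle]]; [exists x; exact Hx|].
  apply Hy0; constructor; intros z [Hz Hne].
  apply NNPP; intro Hz'.
  apply Hne. apply Ha; auto.
Qed.

Lemma wf_rec_exists (L : Type) (lt : L -> L -> Prop) (wf : well_founded lt)
  (R : forall b, (forall a, lt a b -> L) -> L -> Prop)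
  (Hex : forall b rec, exists c, R b rec c) :
  exists phi : L -> L, forall b, R b (fun a _ => phi a) (phi b).
Proof.
  pose (Fb := fun b (rec : forall a, lt a b -> L) => proj1_sig (cid' (Hex b rec))).
  exists (Fix wf (fun _ => L) Fb).
  intro b. rewrite Fix_eq.
  - unfold Fb at 1. apply (proj2_sig (cid' _)).
  - intros x f g Hfg.
    assert (f = g) as ->; [|reflexivity].
    apply functional_extensionality_dep; intro y.
    apply functional_extensionality_dep; intro p. apply Hfg.
Qed.

Lemma ub2 (L : Type) (le : L -> L -> Prop) : well_order le ->
  forall a b, exists c, le a c /\ le b c.
Proof.
  intros [Hr [Ha [Ht [Htot Hmin]]]] a b.
  destruct (Htot a b); [exists b|exists a]; auto.
Qed.

Lemma seg_bound (L : Type) (le : L -> L -> Prop) : regular_cardinal le ->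
  forall (i : L) (j : seg le i -> L), exists b, forall x, le (j x) b.
Proof.
  intros [Hwo [_ [Hinit Hreg]]] i j.
  destruct Hwo as [Hr [Ha [Ht [Htot Hmin]]]].
  apply NNPP; intro Hn.
  assert (Hcof : forall i', exists y, (exists x, j x = y) /\ le i' y).
  { intro i'. apply NNPP; intro H1. apply Hn. exists i'. intro x.
    destruct (Htot (j x) i') as [h|h]; auto.
    exfalso; apply H1; exists (j x); split; eauto. }
  destruct (Hreg _ Hcof) as [f Hf].
  apply (Hinit i).
  exists (fun l => proj1_sig (cid' (proj2_sig (f l)))).
  intros x y Hxy. apply Hf.
  apply sig_eq. 
  rewrite <- (proj2_sig (cid' (proj2_sig (f x)))).
  rewrite <- (proj2_sig (cid' (proj2_sig (f y)))).
  rewrite Hxy. reflexivity.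
Qed.

Lemma colim_ext {C : Category} {I : Type} {le : I -> I -> Prop}
  (X : I -> Ob C) (m : forall i j, le i j -> Hom (X i) (X j)) (S : Ob C) (f : forall i, Hom (X i) S) :
  is_colimit X m S f -> forall (Z : Ob C) (h h' : Hom S Z),
  (forall i, comp h (f i) = comp h' (f i)) -> h = h'.
Proof.
  intros [Hc Hu] Z h h' E.
  destruct (Hu Z (fun i => comp h (f i))) as [k [_ Hk]].
  - intros i j p. rewrite <- comp_assoc, Hc. reflexivity.
  - rewrite (Hk h), (Hk h'); auto.
Qed.

Lemma chain_colimit_exists (L : Type) (le : L -> L -> Prop) (Hlam : regular_cardinal le)
  (C : Category) (HS : semi_algebroidal le C)
  (monoC : forall (X Y : Ob C) (f : Hom X Y), mono f)
  (H : Chain C L le) : exists S f, chain_colimit H S f.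
Proof.
  destruct HS as [HS1 [_ HS3]].
  assert (Hwo := proj1 Hlam).
  destruct Hwo as [Hr [Ha [Ht [Htot Hmin]]]].
  assert (Kdec : forall i, {K : Chain C L le & {k : forall m, Hom (ch_ob K m) (ch_ob H i) |
     (forall m, lambda_small le (ch_ob K m)) /\ chain_colimit K (ch_ob H i) k}}).
  { intro i. destruct (cid' (HS3 (ch_ob H i))) as [K HK].
    destruct (cid' HK) as [k Hk]. exists K, k. tauto. }
  pose (K := fun i => projT1 (Kdec i)).
  pose (ka := fun i => proj1_sig (projT2 (Kdec i)) : forall m, Hom (ch_ob (K i) m) (ch_ob H i)).
  assert (Ksmall : forall i m, lambda_small le (ch_ob (K i) m)).
  { intros i. exact (proj1 (proj2_sig (projT2 (Kdec i)))). }
  assert (Kcol : forall i, chain_colimit (K i) (ch_ob H i) (ka i)).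
  { intros i. exact (proj2 (proj2_sig (projT2 (Kdec i)))). }
  clearbody K ka. clear Kdec.
  assert (fact1 : forall i X, lambda_small le X -> forall e : Hom X (ch_ob H i),
     exists c (g : Hom X (ch_ob (K i) c)), e = comp (ka i c) g).
  { intros i X hX e. exact (hX _ _ _ (Kcol i) e). }
  pose (Fac := fun a n b c (p : le a b) => exists g : Hom (ch_ob (K a) n) (ch_ob (K b) c),
     comp (ka b c) g = comp (ch_map H p) (ka a n)).
  assert (fac_up : forall a n b c c' p, le c c' -> Fac a n b c p -> Fac a n b c' p).
  { intros a n b c c' p q [g Hg]. exists (comp (ch_map (K b) q) g).
    rewrite comp_assoc. rewrite (proj1 (Kcol b)). exact Hg. }
  assert (fac_ex : forall a n b p, exists c, Fac a n b c p).
  { intros a n b p. destruct (fact1 b _ (Ksmall a n) (comp (ch_map H p) (ka a n))) as [c [g Hg]].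
    exists c, g. auto. }
  pose (R := fun b (rec : forall a, lt_of le a b -> L) c =>
     le b c /\ forall a (h : lt_of le a b), Fac a (rec a h) b c (proj1 h) /\ Fac a b b c (proj1 h)).
  assert (Rex : forall b rec, exists c, R b rec c).
  { intros b rec.
    pose (c1 := fun x : seg le b => proj1_sig (cid' (fac_ex (proj1_sig x) (rec _ (proj2_sig x)) b (proj1 (proj2_sig x))))).
    pose (c2 := fun x : seg le b => proj1_sig (cid' (fac_ex (proj1_sig x) b b (proj1 (proj2_sig x))))).
    destruct (seg_bound _ _ Hlam b c1) as [b1 Hb1].
    destruct (seg_bound _ _ Hlam b c2) as [b2 Hb2].
    destruct (ub2 _ _ (proj1 Hlam) b1 b2) as [b3 [H13 H23]].
    destruct (ub2 _ _ (proj1 Hlam) b b3) as [c [Hbc H3c]].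
    exists c. split; auto. intros a h. split.
    - apply (fac_up _ _ _ (c1 (exist _ a h))). 
      + apply (Ht _ b1); [apply Hb1|]. apply (Ht _ b3); auto.
      + exact (proj2_sig (cid' (fac_ex a (rec a h) b (proj1 h)))).
    - apply (fac_up _ _ _ (c2 (exist _ a h))). 
      + apply (Ht _ b2); [apply Hb2|]. apply (Ht _ b3); auto.
      + exact (proj2_sig (cid' (fac_ex a b b (proj1 h)))). }
  destruct (wf_rec_exists _ _ (wo_wf _ _ (proj1 Hlam)) R Rex) as [phi Hphi].
  clear Rex.
  assert (P1 : forall b, le b (phi b)) by (intro b; apply (Hphi b)).
  assert (P2 : forall a b (h : lt_of le a b), Fac a (phi a) b (phi b) (proj1 h) /\ Fac a b b (phi b) (proj1 h)).
  { intros a b h. apply (proj2 (Hphi b) a h). }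
  clear Hphi R.
  pose (Mob := fun b => ch_ob (K b) (phi b)).
  pose (kM := fun b => ka b (phi b) : Hom (Mob b) (ch_ob H b)).
  assert (mex : forall a b (p : le a b), exists g : Hom (Mob a) (Mob b), comp (kM b) g = comp (ch_map H p) (kM a)).
  { intros a b p. destruct (classic (a = b)) as [<-|ne].
    - exists (idm _). rewrite ch_id, comp_idl, comp_idr. reflexivity.
    - destruct (proj1 (P2 a b (conj p ne))) as [g Hg]; exists g; unfold kM, Mob; rewrite (proof_irrelevance _ (proj1 (conj p ne)) p) in Hg; exact Hg. }
  pose (mu := fun a b (p : le a b) => proj1_sig (cid' (mex a b p))).
  assert (Hmu : forall a b p, comp (kM b) (mu a b p) = comp (ch_map H p) (kM a)).
  { intros a b p. exact (proj2_sig (cid' (mex a b p))). }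
  clearbody mu. clear mex.
  assert (Mid : forall i (p : le i i), mu i i p = idm (Mob i)).
  { intros i p. apply (monoC _ _ (kM i)). rewrite Hmu, ch_id, comp_idl, comp_idr. reflexivity. }
  assert (Mcomp : forall i j k (p : le i j) (q : le j k) (r : le i k), mu i k r = comp (mu j k q) (mu i j p)).
  { intros i j k p q r. apply (monoC _ _ (kM k)). rewrite Hmu, comp_assoc, Hmu, <- comp_assoc, Hmu.
    rewrite comp_assoc, (ch_comp H p q r). reflexivity. }
  pose (M := @Build_Chain C L le Mob mu Mid Mcomp).
  destruct (HS1 M (fun b => Ksmall b (phi b))) as [P [pi Hpi]].
  change (forall i, Hom (Mob i) P) in pi.
  assert (piC : forall a b (p : le a b), comp (pi b) (mu a b p) = pi a).
  { intros a b p. exact (proj1 Hpi a b p). }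
  assert (cov : forall i X, lambda_small le X -> forall e : Hom X (ch_ob H i),
    exists g (p : le i g) (g0 : Hom X (Mob g)), comp (kM g) g0 = comp (ch_map H p) e).
  { intros i X hX e. destruct (fact1 i X hX e) as [m [t ->]].
    destruct (classic (le m (phi i))) as [hm|hm].
    - exists i, (Hr i), (comp (ch_map (K i) hm) t).
      rewrite ch_id, comp_idl. unfold kM. rewrite comp_assoc, (proj1 (Kcol i)). reflexivity.
    - assert (him : lt_of le i m).
      { split.
        - apply (Ht _ (phi i)); auto. destruct (Htot m (phi i)); tauto.
        - intros ->. apply hm, P1. }
      destruct (proj2 (P2 i m him)) as [g0 Hg0].
      exists m, (proj1 him), (comp g0 t).
      unfold kM; rewrite comp_assoc, Hg0, comp_assoc. reflexivity. }
  assert (wd0 : forall i X (e : Hom X (ch_ob H i)) g g' (p : le i g) (p' : le i g')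
     (x : Hom X (Mob g)) (x' : Hom X (Mob g')), le g g' ->
     comp (kM g) x = comp (ch_map H p) e -> comp (kM g') x' = comp (ch_map H p') e ->
     comp (pi g) x = comp (pi g') x').
  { intros i X e g g' p p' x x' q Hx Hx'.
    rewrite <- (piC _ _ q), <- comp_assoc. f_equal.
    apply (monoC _ _ (kM g')). rewrite comp_assoc, Hmu, <- comp_assoc, Hx, Hx'.
    rewrite comp_assoc, (ch_comp H p q p'). reflexivity. }
  assert (wd : forall i X (e : Hom X (ch_ob H i)) g g' (p : le i g) (p' : le i g')
     (x : Hom X (Mob g)) (x' : Hom X (Mob g')),
     comp (kM g) x = comp (ch_map H p) e -> comp (kM g') x' = comp (ch_map H p') e ->
     comp (pi g) x = comp (pi g') x').
  { intros i X e g g' p p' x x' Hx Hx'. destruct (Htot g g') as [q|q].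
    - eapply wd0; eauto.
    - symmetry; eapply wd0; eauto. }
  clear wd0.
  assert (rhoex : forall i, exists r : Hom (ch_ob H i) P, forall X, lambda_small le X ->
     forall (e : Hom X (ch_ob H i)) g (p : le i g) (x : Hom X (Mob g)),
     comp (kM g) x = comp (ch_map H p) e -> comp r e = comp (pi g) x).
  { intro i.
    pose (sK := fun m => let w := cid' (cov i _ (Ksmall i m) (ka i m)) in
       let w2 := cid' (proj2_sig w) in let w3 := cid' (proj2_sig w2) in
       comp (pi (proj1_sig w)) (proj1_sig w3)).
    assert (sKspec : forall m g (p : le i g) (x : Hom _ (Mob g)),
       comp (kM g) x = comp (ch_map H p) (ka i m) -> sK m = comp (pi g) x).
    { intros m g p x Hx. unfold sK.
      destruct (cid' (cov i _ (Ksmall i m) (ka i m))) as [g1 Hg1]; simpl.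
      destruct (cid' Hg1) as [p1 Hp1]; simpl.
      destruct (cid' Hp1) as [x1 Hx1]; simpl.
      eapply wd; eauto. }
    clearbody sK.
    destruct (proj2 (Kcol i) P sK) as [r [Hr1 _]].
    - intros m m' q. 
      destruct (cov i _ (Ksmall i m') (ka i m')) as [g [p [x Hx]]].
      rewrite (sKspec m' g p x Hx).
      rewrite <- comp_assoc. symmetry. apply (sKspec m g p).
      rewrite comp_assoc. etransitivity; [apply (f_equal (fun z => comp z (ch_map (K i) q))); exact Hx|]. rewrite <- comp_assoc. f_equal. apply (proj1 (Kcol i)).
    - exists r. intros X hX e g p x Hx.
      destruct (fact1 i X hX e) as [m [t ->]].
      rewrite comp_assoc, Hr1.
      destruct (cov i _ (Ksmall i m) (ka i m)) as [g1 [p1 [x1 Hx1]]].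
      rewrite (sKspec m g1 p1 x1 Hx1), <- comp_assoc.
      eapply wd; [|exact Hx]. rewrite comp_assoc, Hx1, <- comp_assoc. reflexivity. }
  pose (rho := fun i => proj1_sig (cid' (rhoex i))).
  assert (Hrho : forall i X, lambda_small le X ->
     forall (e : Hom X (ch_ob H i)) g (p : le i g) (x : Hom X (Mob g)),
     comp (kM g) x = comp (ch_map H p) e -> comp (rho i) e = comp (pi g) x).
  { intro i. exact (proj2_sig (cid' (rhoex i))). }
  clearbody rho. clear rhoex.
  assert (rho_pi : forall b, comp (rho b) (kM b) = pi b).
  { intro b. transitivity (comp (pi b) (idm _)); [|apply comp_idr].
    apply (Hrho b _ (Ksmall b (phi b)) (kM b) b (Hr b) (idm _)).
    rewrite ch_id, comp_idl, comp_idr. reflexivity. }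
  exists P, rho. split.
  - intros i j q. apply (colim_ext _ _ _ _ (Kcol i)). intro m.
    rewrite <- comp_assoc.
    destruct (cov j _ (Ksmall i m) (comp (ch_map H q) (ka i m))) as [g [p [x Hx]]].
    rewrite (Hrho j _ (Ksmall i m) _ g p x Hx).
    symmetry. apply (Hrho i _ (Ksmall i m) _ g (Ht _ _ _ q p) x).
    rewrite Hx, comp_assoc, (ch_comp H q p (Ht _ _ _ q p)). reflexivity.
  - intros Z z Hz.
    destruct (proj2 Hpi Z (fun b => comp (z b) (kM b))) as [th [Hth _]].
    + intros a b p. simpl. rewrite <- comp_assoc. 
      change (comp (z b) (comp (kM b) (mu a b p)) = comp (z a) (kM a)).
      rewrite Hmu, comp_assoc, Hz. reflexivity.
    + exists th. split.
      * intro i. apply (colim_ext _ _ _ _ (Kcol i)). intro m.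
        destruct (cov i _ (Ksmall i m) (ka i m)) as [g [p [x Hx]]].
        rewrite <- comp_assoc, (Hrho i _ (Ksmall i m) _ g p x Hx), comp_assoc, Hth.
        rewrite <- comp_assoc, Hx, comp_assoc, Hz. reflexivity.
      * intros th' Hth'. apply (colim_ext _ _ _ _ Hpi). intro b.
        rewrite Hth, <- rho_pi, comp_assoc, Hth'. reflexivity.
Qed.

Lemma comma_fst {A B C : Category} {F : Functor A C} {G : Functor B C}
  (X Y Z : Ob (Comma F G)) (g : Hom Y Z) (f : Hom X Y) :
  fst (proj1_sig (comp g f)) = comp (fst (proj1_sig g)) (fst (proj1_sig f)).
Proof. destruct g as [[g1 g2] pg], f as [[f1 f2] pf]; reflexivity. Qed.

Lemma comma_snd {A B C : Category} {F : Functor A C} {G : Functor B C}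
  (X Y Z : Ob (Comma F G)) (g : Hom Y Z) (f : Hom X Y) :
  snd (proj1_sig (comp g f)) = comp (snd (proj1_sig g)) (snd (proj1_sig f)).
Proof. destruct g as [[g1 g2] pg], f as [[f1 f2] pf]; reflexivity. Qed.

Lemma comma_eq {A B C : Category} {F : Functor A C} {G : Functor B C}
  (X Y : Ob (Comma F G)) (g f : Hom X Y) :
  fst (proj1_sig g) = fst (proj1_sig f) -> snd (proj1_sig g) = snd (proj1_sig f) -> g = f.
Proof.
  destruct g as [[g1 g2] pg], f as [[f1 f2] pf]; simpl; intros -> ->.
  f_equal. apply proof_irrelevance.
Qed.

Lemma comma_sq {A B C : Category} {F : Functor A C} {G : Functor B C}
  (X Y : Ob (Comma F G)) (h : Hom X Y) :
  comp (carr Y) (fmap F (fst (proj1_sig h))) = comp (fmap G (snd (proj1_sig h))) (carr X).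
Proof. exact (proj2_sig h). Qed.

Lemma comma_small (L : Type) (le : L -> L -> Prop) (Hlam : regular_cardinal le)
  (CA CB CC : Category) (HA : semi_algebroidal le CA) (HB : semi_algebroidal le CB)
  (monoA : forall (X Y : Ob CA) (f : Hom X Y), mono f)
  (monoB : forall (X Y : Ob CB) (f : Hom X Y), mono f)
  (F : Functor CA CC) (G : Functor CB CC)
  (F_cocont : lambda_cocontinuous le F) (G_mono : preserves_monos G)
  (O : Ob (Comma F G)) :
  lambda_small le (cdom O) -> lambda_small le (ccod O) -> lambda_small le O.
Proof.
  intros hX hY Hc S s Hs h.
  assert (idA : forall i (p : le i i), fst (proj1_sig (ch_map Hc p)) = idm (cdom (ch_ob Hc i))).
  { intros i p. rewrite (ch_id Hc p). reflexivity. }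
  assert (compA : forall i j k (p : le i j) (q : le j k) (r : le i k),
    fst (proj1_sig (ch_map Hc r)) = comp (fst (proj1_sig (ch_map Hc q))) (fst (proj1_sig (ch_map Hc p)))).
  { intros. rewrite (ch_comp Hc p q r). apply comma_fst. }
  assert (idB : forall i (p : le i i), snd (proj1_sig (ch_map Hc p)) = idm (ccod (ch_ob Hc i))).
  { intros i p. rewrite (ch_id Hc p). reflexivity. }
  assert (compB : forall i j k (p : le i j) (q : le j k) (r : le i k),
    snd (proj1_sig (ch_map Hc r)) = comp (snd (proj1_sig (ch_map Hc q))) (snd (proj1_sig (ch_map Hc p)))).
  { intros. rewrite (ch_comp Hc p q r). apply comma_snd. }
  pose (HA' := @Build_Chain CA L le (fun i => cdom (ch_ob Hc i))
      (fun i j p => fst (proj1_sig (ch_map Hc p))) idA compA).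
  pose (HB' := @Build_Chain CB L le (fun i => ccod (ch_ob Hc i))
      (fun i j p => snd (proj1_sig (ch_map Hc p))) idB compB).
  destruct (chain_colimit_exists L le Hlam CA HA monoA HA') as [P [pa HPa]].
  destruct (chain_colimit_exists L le Hlam CB HB monoB HB') as [Q [qb HQb]].
  change (forall i, Hom (cdom (ch_ob Hc i)) P) in pa.
  change (forall i, Hom (ccod (ch_ob Hc i)) Q) in qb.
  assert (paC : forall i j (p : le i j), comp (pa j) (fst (proj1_sig (ch_map Hc p))) = pa i).
  { intros i j p. exact (proj1 HPa i j p). }
  assert (qbC : forall i j (p : le i j), comp (qb j) (snd (proj1_sig (ch_map Hc p))) = qb i).
  { intros i j p. exact (proj1 HQb i j p). }
  pose proof (F_cocont HA' (fun _ => I) P pa HPa) as HFP.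
  destruct (proj2 HFP (G Q) (fun i => comp (fmap G (qb i)) (carr (ch_ob Hc i)))) as [c [Hc1 _]].
  { intros i j p. simpl.
    rewrite <- comp_assoc, comma_sq, comp_assoc, <- fmap_comp, qbC. reflexivity. }
  pose (PQ := @Build_comma_ob _ _ _ F G P Q c).
  assert (pisq : forall i, comp (carr PQ) (fmap F (fst (pa i, qb i))) = comp (fmap G (snd (pa i, qb i))) (carr (ch_ob Hc i))).
  { intro i. exact (Hc1 i). }
  pose (pi := fun i => exist _ (pa i, qb i) (pisq i) : comma_hom (ch_ob Hc i) PQ).
  destruct (proj2 Hs PQ pi) as [psi [Hpsi _]].
  { intros i j p. apply comma_eq.
    - rewrite comma_fst. apply paC.
    - rewrite comma_snd. apply qbC. }
  pose (hA := fst (proj1_sig (comp psi h))).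
  pose (hB := snd (proj1_sig (comp psi h))).
  destruct (hX HA' P pa HPa hA) as [j1 [gA HgA]].
  destruct (hY HB' Q qb HQb hB) as [j2 [gB HgB]].
  destruct (ub2 _ _ (proj1 Hlam) j1 j2) as [k [p1 p2]].
  pose (gA' := comp (fst (proj1_sig (ch_map Hc p1))) gA).
  pose (gB' := comp (snd (proj1_sig (ch_map Hc p2))) gB).
  assert (EA : comp (pa k) gA' = hA).
  { unfold gA'. rewrite comp_assoc, paC. symmetry. exact HgA. }
  assert (EB : comp (qb k) gB' = hB).
  { unfold gB'. rewrite comp_assoc, qbC. symmetry. exact HgB. }
  assert (sq : comp (carr (ch_ob Hc k)) (fmap F gA') = comp (fmap G gB') (carr O)).
  { apply (G_mono _ _ (qb k) (monoB _ _ _)).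
    rewrite !comp_assoc. 
    transitivity (comp (comp c (fmap F (pa k))) (fmap F gA')).
    { f_equal. symmetry. exact (Hc1 k). }
    rewrite <- comp_assoc, <- fmap_comp, EA, <- fmap_comp, EB.
    exact (comma_sq _ _ (comp psi h)). }
  pose (g := exist _ (gA', gB') sq : comma_hom O (ch_ob Hc k)).
  exists k, g.
  assert (psiA : forall i, comp (fst (proj1_sig psi)) (fst (proj1_sig (s i))) = pa i).
  { intro i. rewrite <- comma_fst, Hpsi. reflexivity. }
  assert (psiB : forall i, comp (snd (proj1_sig psi)) (snd (proj1_sig (s i))) = qb i).
  { intro i. rewrite <- comma_snd, Hpsi. reflexivity. }
  apply comma_eq.
  - rewrite comma_fst. apply (monoA _ _ (fst (proj1_sig psi))).
    symmetry. rewrite comp_assoc. etransitivity; [apply (f_equal (fun z => comp z gA')); apply psiA|].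
    etransitivity; [exact EA|]. unfold hA. apply comma_fst.
  - rewrite comma_snd. apply (monoB _ _ (snd (proj1_sig psi))).
    symmetry. rewrite comp_assoc. etransitivity; [apply (f_equal (fun z => comp z gB')); apply psiB|].
    etransitivity; [exact EB|]. unfold hB. apply comma_snd.
Qed.

Theorem proposition2p19
  (L : Type) (le : L -> L -> Prop) (Hlam : regular_cardinal le)
  (CA CB CC : Category)
  (HA : algebroidal le CA) (HB : algebroidal le CB)
  (monoA : forall (X Y : Ob CA) (f : Hom X Y), mono f)
  (monoB : forall (X Y : Ob CB) (f : Hom X Y), mono f)
  (F : Functor CA CC) (G : Functor CB CC)
  (F_faithful : faithful F)
  (F_cocont : lambda_cocontinuous le F)
  (F_mu_cocont : forall i : L, mu_small_cocontinuous le i F)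
  (F_pres : preserves_smallness_wrt le F G)
  (G_cocont : lambda_small_cocontinuous le G)
  (G_mono : preserves_monos G)
  (count : forall (X : Ob CA) (Y : Ob CB), lambda_small le X -> lambda_small le Y ->
     exists c : Hom (F X) (G Y) -> L, injective c)
  (jep : JEP (@lambda_small L le (Comma F G)))
  (ap : AP (@lambda_small L le (Comma F G)))
  (U : Ob (Comma F G))
  (U_univ : universal_for (fun _ => True) U)
  (U_hom : homogeneous_for (@lambda_small L le (Comma F G)) U) :
  saturated_for (@lambda_small L le CA) (cdom U) <-> mixed_amalgamation le F G.
Proof.
  destruct (proj1 HB) as [_ [_ HB3]].
  destruct (HB3 (ccod U)) as [K [k [Ksm Kcol]]].
  split.
  - intros Hsat X Y T1 hX hY hT g a.
    pose (O := @Build_comma_ob _ _ _ F G X T1 a).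
    destruct (U_univ O I) as [xt _].
    pose (x := fst (proj1_sig xt)). pose (t := snd (proj1_sig xt)).
    assert (sq : comp (carr U) (fmap F x) = comp (fmap G t) a) by exact (comma_sq _ _ xt).
    destruct (Hsat X Y hX hY x g) as [y Hy].
    destruct (F_pres K (ccod U) k Kcol Y hY (comp (carr U) (fmap F y))) as [j1 [b0 Hb0]].
    destruct (hT K (ccod U) k Kcol t) as [j2 [t0 Ht0]].
    destruct (ub2 _ _ (proj1 Hlam) j1 j2) as [kk [p1 p2]].
    exists (ch_ob K kk), (comp (ch_map K p2) t0), (comp (fmap G (ch_map K p1)) b0).
    split; [apply Ksm|].
    apply (G_mono _ _ (k kk) (monoB _ _ _)).
    rewrite !comp_assoc, <- !fmap_comp, (proj1 Kcol j1 kk p1), Hb0.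
    rewrite comp_assoc, (proj1 Kcol j2 kk p2), <- Ht0.
    rewrite <- comp_assoc, <- fmap_comp, Hy. exact sq.
  - intros Hmix X Y hX hY f g.
    destruct (F_pres K (ccod U) k Kcol X hX (comp (carr U) (fmap F f))) as [j [a Ha]].
    destruct (Hmix X Y (ch_ob K j) hX hY (Ksm j) g a) as [T2 [hh [b [hT2 Hb]]]].
    pose (O1 := @Build_comma_ob _ _ _ F G X (ch_ob K j) a).
    pose (O2 := @Build_comma_ob _ _ _ F G Y T2 b).
    pose (m12 := exist _ (g, hh) Hb : comma_hom O1 O2).
    pose (m1U := exist _ (f, k j) (eq_sym Ha) : comma_hom O1 U).
    destruct (U_univ O2 I) as [w _].
    assert (hO1 : lambda_small le (O1 : Ob (Comma F G))).
    { apply (comma_small L le Hlam CA CB CC (proj1 HA) (proj1 HB) monoA monoB F G F_cocont G_mono);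
        [exact hX | apply Ksm]. }
    destruct (U_hom O1 hO1 (comp w m12) m1U) as [sg [_ Hsg]].
    exists (fst (proj1_sig (comp sg w))).
    apply (f_equal (fun z => fst (proj1_sig z))) in Hsg.
    rewrite !comma_fst in Hsg. rewrite comma_fst, <- comp_assoc. exact Hsg.
Qed.
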